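(* Let $\Gamma$ be a regular bipartite simple graph. Then $E(\Gamma)=E(\bar\Gamma)$ if and only if $\Gamma\cong C_4$ or $\Gamma\cong Cr(t)$ for some $t\ge 2$. Moreover, in these cases $\Gamma$ and $\bar\Gamma$ are both integral and are not isospectral to each other.
   Context: The energy $E(\Gamma)$ is the sum of the absolute values of the adjacency eigenvalues (with multiplicity); $\bar\Gamma$ is the complement of $\Gamma$. $C_4$ is the 4-cycle. The crown graph $Cr(t)$ is obtained from the complete bipartite graph $K_{t,t}$ by deleting a perfect matching (equivalently $Cr(t)=K_2\otimes K_t$, Kronecker product). A graph is integral if all its adjacency eigenvalues are integers; two graphs are isospectral if their adjacency spectra (with multiplicities) coincide. *)

(* Defs.v *)
From HB Require Import structures.
From mathcomp Require Import all_boot all_order all_algebra all_field.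
Set Implicit Arguments. Unset Strict Implicit. Unset Printing Implicit Defensive.
Import Order.TTheory GRing.Theory Num.Theory.
Local Open Scope ring_scope.

Definition simple_graph (T : finType) (e : rel T) : Prop :=
  (forall x y, e x y = e y x) /\ (forall x, ~~ e x x).

Definition regular_graph (T : finType) (e : rel T) : Prop :=
  exists k : nat, forall x : T, #|[set y | e x y]| = k.

Definition bipartite_graph (T : finType) (e : rel T) : Prop :=
  exists A : {set T}, forall x y, e x y -> (x \in A) != (y \in A).

Definition compl_graph (T : finType) (e : rel T) : rel T :=
  fun x y => (x != y) && ~~ e x y.

Definition adj_mx (T : finType) (e : rel T) : 'M[algC]_#|T| :=
  \matrix_(i, j) (e (enum_val i) (enum_val j))%:R.

(* adjacency spectrum, with multiplicities: the roots of the characteristic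
   polynomial (which is monic, so it equals \prod_(z <- spectrum) ('X - z)) *)
Definition spectrum (T : finType) (e : rel T) : seq algC :=
  sval (closed_field_poly_normal (char_poly (adj_mx e))).

Definition energy (T : finType) (e : rel T) : algC :=
  \sum_(z <- spectrum e) `|z|.

Definition integral_graph (T : finType) (e : rel T) : Prop :=
  all (fun z => z \is a Num.int) (spectrum e).

Definition isospectral (T S : finType) (e : rel T) (f : rel S) : Prop :=
  perm_eq (spectrum e) (spectrum f).

Definition graph_iso (T S : finType) (e : rel T) (f : rel S) : Prop :=
  exists g : T -> S, bijective g /\ forall x y, e x y = f (g x) (g y).

Definition C4 : rel 'I_4 :=
  fun i j => ((i.+1 %% 4)%N == j) || ((j.+1 %% 4)%N == i).

(* crown graph Cr(t) = K_2 (x) K_t on bool * 'I_t *)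
Definition crown (t : nat) : rel (bool * 'I_t) :=
  fun u v => (u.1 != v.1) && (u.2 != v.2).
Arguments crown t : clear implicits.

(* Main.v *)
Require Import Defs.
From HB Require Import structures.
From mathcomp Require Import all_boot all_order all_algebra all_field.
From mathcomp Require Import ring zify.
Set Implicit Arguments. Unset Strict Implicit. Unset Printing Implicit Defensive.
Import Order.TTheory GRing.Theory Num.Theory.
Local Open Scope ring_scope.

Lemma char_poly_horner n (A : 'M[algC]_n) a : (char_poly A).[a] = \det (a%:M - A).
Proof.
symmetry; rewrite /char_poly /= horner_sum; apply: eq_bigr => s _.
rewrite hornerM horner_exp !hornerE; congr (_ * _).
rewrite (big_morph _ (fun p q => hornerM p q a) (hornerC 1 a)).
by apply: eq_bigr => i _; rewrite !mxE !(hornerE, hornerMn).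
Qed.

Lemma spectrumE (T : finType) (e : rel T) :
  char_poly (adj_mx e) = \prod_(z <- spectrum e) ('X - z%:P).
Proof.
rewrite /spectrum; case: closed_field_poly_normal => r /= Hr.
by rewrite {1}Hr (monicP (char_poly_monic _)) scale1r.
Qed.

Lemma size_spectrum (T : finType) (e : rel T) : size (spectrum e) = #|T|.
Proof.
have := size_char_poly (adj_mx e); rewrite spectrumE size_prod_XsubC.
by case.
Qed.

Lemma poly_ext (p q : {poly algC}) : (forall x, p.[x] = q.[x]) -> p = q.
Proof.
move=> H; apply/eqP; rewrite -subr_eq0; apply/eqP.
apply: (@roots_geq_poly_eq0 _ _ [seq i%:R | i <- iota 0 (size (p - q))]).
- by apply/allP => x _; rewrite /root hornerD hornerN H subrr.
- by rewrite map_inj_uniq ?iota_uniq // => i j /eqP; rewrite eqr_nat => /eqP.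
- by rewrite size_map size_iota.
Qed.

Lemma det_shift (T : finType) (e : rel T) y :
  \det (y%:M + adj_mx e) = \prod_(z <- spectrum e) (y + z).
Proof.
have -> : y%:M + adj_mx e = (-1) *: ((- y)%:M - adj_mx e).
  by rewrite scaleN1r opprB (raddfN (@scalar_mx _ _)) opprK addrC.
rewrite detZ -char_poly_horner spectrumE horner_prod.
rewrite -(size_spectrum e).
elim: (spectrum e) => [|z s IH]; first by rewrite !big_nil expr0 mulr1.
rewrite !big_cons /= hornerXsubC exprS -IH; ring.
Qed.

Lemma sum_enum (T : finType) (F : T -> algC) :
  \sum_x F x = \sum_(i < #|T|) F (enum_val i).
Proof. by rewrite (reindex (@enum_val T T)) //; apply: onW_bij; apply: enum_val_bij. Qed.

Lemma eigen_vec (T : finType) (e : rel T) l : l \in spectrum e ->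
  exists2 v : T -> algC, (exists x, v x != 0) &
    forall y, \sum_x (e x y)%:R * v x = l * v y.
Proof.
move=> Hl.
have : eigenvalue (adj_mx e) l by rewrite eigenvalue_root_char spectrumE root_prod_XsubC.
case/eigenvalueP => v Hv vn0.
exists (fun x => v 0 (enum_rank x)).
  have [j Hj] : exists j, v 0 j != 0.
    apply/existsP; apply: contraR vn0 => /existsPn H.
    by apply/eqP/rowP => j; rewrite mxE; move/negbNE: (H j) => /eqP.
  by exists (enum_val j); rewrite enum_valK.
move=> y; move/rowP: Hv => /(_ (enum_rank y)); rewrite !mxE => <-.
rewrite sum_enum; apply: eq_bigr => i _.
by rewrite enum_valK mxE enum_rankK mulrC.
Qed.

Lemma eigen_in (T : finType) (e : rel T) l (v : T -> algC) :
  (exists x, v x != 0) -> (forall y, \sum_x (e x y)%:R * v x = l * v y) ->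
  l \in spectrum e.
Proof.
move=> [x0 Hx0] Hv.
have : eigenvalue (adj_mx e) l.
  apply/eigenvalueP; exists (\row_j v (enum_val j)).
    apply/rowP => j; rewrite !mxE -Hv [RHS]sum_enum.
    by apply: eq_bigr => i _; rewrite !mxE mulrC.
  apply/eqP => /rowP /(_ (enum_rank x0)); rewrite !mxE enum_rankK => /eqP.
  by rewrite (negPf Hx0).
by rewrite eigenvalue_root_char spectrumE root_prod_XsubC.
Qed.

Lemma det_rank1 n (u : 'cV[algC]_n) (w : 'rV[algC]_n) :
  \det (1%:M + u *m w) = 1 + (w *m u) 0 0.
Proof.
pose P : 'M_(1 + n) := block_mx 1%:M (- w) u 1%:M.
pose Q : 'M_(1 + n) := block_mx 1%:M w 0 1%:M.
have HPQ : P *m Q = block_mx 1%:M 0 u (1%:M + u *m w).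
  by rewrite mulmx_block !mulmx1 !mul1mx !mulmx0 !addr0 subrr addrC.
have HQP : Q *m P = block_mx (1%:M + w *m u) 0 u 1%:M.
  by rewrite mulmx_block !mulmx1 !mul1mx !mul0mx !add0r addNr.
have : \det (P *m Q) = \det (Q *m P) by rewrite !det_mulmx mulrC.
rewrite HPQ HQP !det_lblock !det1 mul1r mulr1 => ->.
by rewrite det_mx11 !mxE.
Qed.

Lemma sum_ind (T : finType) (P : pred T) (F : T -> algC) :
  \sum_x (P x)%:R * F x = \sum_(x | P x) F x.
Proof. by rewrite [RHS]big_mkcond; apply: eq_bigr => x _; case: (P x); rewrite ?mul1r ?mul0r. Qed.

Lemma sum_indC (T : finType) (P : pred T) :
  \sum_x ((P x)%:R : algC) = #|[set x | P x]|%:R.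
Proof.
rewrite (eq_bigr (fun x => (P x)%:R * 1)); last by move=> x _; rewrite mulr1.
by rewrite sum_ind sumr_const cardsE.
Qed.

Lemma compl_adj (T : finType) (e : rel T) : simple_graph e ->
  adj_mx (compl_graph e) = const_mx 1 - 1%:M - adj_mx e.
Proof.
move=> [_ irr]; apply/matrixP => i j; rewrite !mxE /compl_graph.
have [<-|ne] := eqVneq i j.
  by rewrite eqxx (negPf (irr _)) /= subrr subr0.
have -> : (enum_val i != enum_val j) by rewrite (inj_eq enum_val_inj).
by case: (e _ _); rewrite /= ?subr0 ?subrr ?sub0r.
Qed.

Lemma row_sum (T : finType) (e : rel T) k : simple_graph e ->
  (forall x, #|[set y | e x y]| = k) ->
  forall i, \sum_j adj_mx e i j = k%:R.
Proof.
move=> _ Hk i; rewrite -(Hk (enum_val i)) -sum_indC [RHS]sum_enum.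
by apply: eq_bigr => j _; rewrite mxE.
Qed.

Lemma compl_point (T : finType) (e : rel T) k x : simple_graph e ->
  (forall x, #|[set y | e x y]| = k) -> k%:R \in spectrum e ->
  (char_poly (adj_mx (compl_graph e))).[x] * (x + 1 + k%:R) =
  (x + 1 + k%:R - #|T|%:R) * (x + 1 + k%:R) *
     \prod_(z <- rem k%:R (spectrum e)) (x + 1 + z).
Proof.
move=> Hs Hk kS.
set c := x + 1 + k%:R.
have [c0|cn0] := eqVneq c 0; first by rewrite c0 !mulr0 mul0r.
rewrite char_poly_horner compl_adj //.
set A := adj_mx e; set J := const_mx 1 : 'M[algC]_#|T|.
set M := (x + 1)%:M + A.
have -> : x%:M - (J - 1%:M - A) = M - J.
  apply/matrixP => i j; rewrite !mxE; ring.
have AJ : A *m J = k%:R *: J.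
  apply/matrixP => i j; rewrite /J !mxE -(row_sum Hs Hk i).
  under eq_bigr do rewrite [const_mx _ _ _]mxE mulr1.
  by rewrite mulr1.
have MJ : M *m J = c *: J.
  by rewrite mulmxDl mul_scalar_mx AJ -scalerDl.
have -> : M - J = M *m (1%:M - c^-1 *: J).
  by rewrite mulmxBr mulmx1 -scalemxAr MJ scalerA mulVf // scale1r.
rewrite det_mulmx.
have -> : 1%:M - c^-1 *: J = 1%:M + (- c^-1 *: (const_mx 1 : 'cV_#|T|)) *m (const_mx 1 : 'rV_#|T|).
  rewrite -scalemxAl scaleNr; congr (_ - _ *: _).
  by apply/matrixP => i j; rewrite !mxE big_ord1 !mxE mulr1.
rewrite det_rank1 mxE.
rewrite (eq_bigr (fun _ => - c^-1)); last by move=> i _; rewrite !mxE mul1r mulr1.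
rewrite sumr_const card_ord /M det_shift (perm_big _ (perm_to_rem kS)) big_cons.
rewrite -/c.
set P := \prod_(_ <- _) _.
rewrite -mulr_natr /=.
field.
by [].
Qed.

Lemma compl_spec (T : finType) (e : rel T) k : simple_graph e ->
  (forall x, #|[set y | e x y]| = k) -> k%:R \in spectrum e ->
  perm_eq (spectrum (compl_graph e))
    ((#|T|%:R - 1 - k%:R) :: map (fun z => -1 - z) (rem k%:R (spectrum e))).
Proof.
move=> Hs Hk kS.
have H : char_poly (adj_mx (compl_graph e)) * ('X - (-1 - k%:R)%:P) =
   (('X - (#|T|%:R - 1 - k%:R)%:P) *
      \prod_(z <- rem k%:R (spectrum e)) ('X - (-1 - z)%:P)) * ('X - (-1 - k%:R)%:P).
  apply: poly_ext => x; rewrite !hornerM !hornerXsubC horner_prod.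
  have -> : x - (-1 - k%:R) = x + 1 + k%:R by ring.
  rewrite compl_point //.
  rewrite [RHS]mulrAC; congr (_ * _ * _); first ring.
  by apply: eq_bigr => z _; rewrite hornerXsubC; ring.
move/mulIf: H; rewrite polyXsubC_eq0 => /(_ isT).
rewrite spectrumE => H; apply: prod_XsubC_eq; rewrite H big_cons big_map.
by [].
Qed.

Lemma bip_sym (T : finType) (e : rel T) : simple_graph e -> bipartite_graph e ->
  perm_eq (spectrum e) (map (fun z => - z) (spectrum e)).
Proof.
move=> Hs [B HB].
apply: prod_XsubC_eq; apply: poly_ext => x.
rewrite big_map !horner_prod.
under eq_bigr do rewrite hornerXsubC.
under [RHS]eq_bigr do rewrite hornerXsubC opprK.
rewrite -det_shift.
have -> : \prod_(i <- spectrum e) (x - i) = (char_poly (adj_mx e)).[x].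
  by rewrite spectrumE horner_prod; apply: eq_bigr => z _; rewrite hornerXsubC.
rewrite char_poly_horner.
pose d : 'rV[algC]_#|T| := \row_i (if enum_val i \in B then 1 else -1).
have dd : forall i, d 0 i * d 0 i = 1.
  by move=> i; rewrite mxE; case: ifP => _; rewrite ?mulr1 ?mulrNN ?mulr1.
have DD : diag_mx d *m diag_mx d = 1%:M.
  apply/matrixP => i j; rewrite mul_diag_mx [LHS]mxE [diag_mx d i j]mxE [RHS]mxE.
  case: (eqVneq i j) => [->|_]; rewrite ?mulr1n ?mulr0n ?mulr0 //.
have -> : x%:M + adj_mx e = diag_mx d *m (x%:M - adj_mx e) *m diag_mx d.
  apply/matrixP => i j; rewrite mul_mx_diag mul_diag_mx !mxE.
  case: (eqVneq i j) => [->|ne]; rewrite ?mulr1n ?mulr0n.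
    have [_ irr] := Hs.
    by rewrite (negPf (irr _)) !subr0 addr0; case: (enum_val j \in B); ring.
  rewrite add0r sub0r.
  case E: (e (enum_val i) (enum_val j)); last by rewrite oppr0 mulr0 mul0r.
  have := HB _ _ E.
  by case: (enum_val i \in B); case: (enum_val j \in B) => //= _; ring.
rewrite !det_mulmx mulrAC -det_mulmx DD det1 mul1r.
by [].
Qed.

Definition hh (z : algC) := `|1 + z| + `|1 - z| - 2 * `|z|.

Lemma deg_in_spec (T : finType) (e : rel T) k : simple_graph e ->
  (forall x, #|[set y | e x y]| = k) -> (0 < #|T|)%N -> k%:R \in spectrum e.
Proof.
move=> [sym _] Hk /card_gt0P [x0 _].
apply: (@eigen_in _ _ _ (fun _ => 1)); first by exists x0; rewrite oner_eq0.
move=> y; rewrite mulr1; under eq_bigr do rewrite mulr1.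
rewrite sum_indC -(Hk y); congr (_ %:R); apply: eq_card => x; rewrite !inE sym.
by [].
Qed.

Lemma energy_diff (T : finType) (e : rel T) k : simple_graph e -> bipartite_graph e ->
  (forall x, #|[set y | e x y]| = k) -> (k < #|T|)%N ->
  (energy e = energy (compl_graph e)) <->
  ((2 * #|T|)%:R + \sum_(z <- spectrum e) hh z = (4 + 4 * k)%:R).
Proof.
move=> Hs Hb Hk kn.
have kS := deg_in_spec Hs Hk (leq_ltn_trans (leq0n k) kn).
set S := spectrum e.
set a := \sum_(z <- S) `|1 + z|.
have Ec : energy (compl_graph e) = (#|T| - 1 - k)%:R + a - (1 + k%:R).
  rewrite /energy (perm_big _ (compl_spec Hs Hk kS)) big_cons big_map.
  have -> : #|T|%:R - 1 - k%:R = (#|T| - 1 - k)%:R :> algC.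
    rewrite natrB; last by rewrite leq_subRL ?addn1 // (leq_ltn_trans (leq0n k) kn).
    by rewrite natrB // (leq_ltn_trans (leq0n k) kn).
  rewrite normr_nat /a (perm_big _ (perm_to_rem kS)) big_cons.
  have -> : `|1 + k%:R| = 1 + k%:R :> algC.
    have e1 : (1 + k%:R : algC) = (1 + k)%:R by rewrite natrD.
    by rewrite e1 normr_nat.
  have -> : \sum_(z <- rem k%:R S) `|-1 - z| = \sum_(z <- rem k%:R S) `|1 + z|.
    by apply: eq_bigr => z _; rewrite -normrN opprB opprK addrC.
  rewrite /=; ring.
have a2 : \sum_(z <- S) `|1 - z| = a.
  rewrite /a (perm_big _ (bip_sym Hs Hb)) big_map.
  by apply: eq_bigr => z _; rewrite opprK.
have Hh : \sum_(z <- S) hh z = 2 * a - 2 * energy e.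
  rewrite /hh /energy -/S.
  rewrite (eq_bigr (fun z => (`|1 + z| + `|1 - z|) + (- (2 * `|z|)))) //.
  rewrite big_split /= big_split /= a2 sumrN -mulr_sumr /= -/a; ring.
have eN : (#|T| - 1 - k)%:R = #|T|%:R - 1 - k%:R :> algC.
  rewrite natrB; last by rewrite leq_subRL ?addn1 // (leq_ltn_trans (leq0n k) kn).
  by rewrite natrB // (leq_ltn_trans (leq0n k) kn).
have key : 2 * (energy (compl_graph e) - energy e) =
    (2 * #|T|)%:R + \sum_(z <- S) hh z - (4 + 4 * k)%:R.
  rewrite Ec Hh eN !natrD; ring.
split => [E|E].
  by apply/eqP; rewrite -subr_eq0 -key E subrr mulr0.
apply/eqP; rewrite eq_sym -subr_eq0; apply/eqP.
have : 2 * (energy (compl_graph e) - energy e) = 0 by rewrite key E subrr.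
by move/eqP; rewrite mulf_eq0 pnatr_eq0 /= => /eqP.
Qed.

Lemma hh_ge0 z : 0 <= hh z.
Proof.
rewrite /hh subr_ge0.
have := ler_normB (1 + z) (1 - z).
have -> : 1 + z - (1 - z) = 2 * z by ring.
by rewrite normrM normr_nat.
Qed.

Lemma hh0 : hh 0 = 2.
Proof. rewrite /hh addr0 subr0 normr0 normr1 mulr0 subr0 //. Qed.

Lemma hhN z : hh (- z) = hh z.
Proof. by rewrite /hh opprK normrN [`|1 - z| + _]addrC. Qed.

Lemma hh_nat m : (1 <= m)%N -> hh m%:R = 0.
Proof.
move=> m1; rewrite /hh -[`|1 - m%:R|]normrN opprB.
have -> : (1 + m%:R : algC) = (1 + m)%:R by rewrite natrD.
have -> : (m%:R - 1 : algC) = (m - 1)%:R by rewrite natrB.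
rewrite !normr_nat natrB // natrD; ring.
Qed.

Local Close Scope ring_scope.

Lemma card_sum (T : finType) (P : pred T) : #|[set y | P y]| = \sum_y (P y : nat).
Proof.
rewrite cardsE -sum1_card big_mkcond /=; apply: eq_bigr => y _.
by rewrite unfold_in; case: (P y).
Qed.

Lemma opp_card (T : finType) (B : {set T}) x :
  #|[set y | (y \in B) != (x \in B)]| = if x \in B then #|~: B| else #|B|.
Proof.
by case: (x \in B); apply: eq_card => y; rewrite !inE //; case: (y \in B).
Qed.

Lemma deg_le (T : finType) (e : rel T) (B : {set T}) k x :
  (forall x y, e x y -> (x \in B) != (y \in B)) ->
  (forall x, #|[set y | e x y]| = k) ->
  (k <= if x \in B then #|~: B| else #|B|)%N.
Proof.
move=> HB Hk; rewrite -opp_card -(Hk x); apply: subset_leq_card.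
by apply/subsetP => y; rewrite !inE => /HB; rewrite eq_sym.
Qed.

Lemma balanced (T : finType) (e : rel T) (B : {set T}) k :
  simple_graph e ->
  (forall x y, e x y -> (x \in B) != (y \in B)) ->
  (forall x, #|[set y | e x y]| = k) -> (0 < k)%N -> #|B| = #|~: B|.
Proof.
move=> [sym _] HB Hk k0.
pose N := \sum_x \sum_y ((x \in B) && e x y : nat).
have N1 : N = k * #|B|.
  rewrite /N -sum1_card big_distrr /= [RHS]big_mkcond /=; apply: eq_bigr => x _.
  case xB: (x \in B); last by rewrite big1.
  by rewrite -(Hk x) card_sum /= muln1.
have N2 : N = k * #|~: B|.
  rewrite /N exchange_big /= -sum1_card big_distrr /= [RHS]big_mkcond /=; apply: eq_bigr => y _.
  rewrite !inE.
  case yB: (y \in B) => /=.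
    rewrite big1 // => x _; case xB: (x \in B) => //=.
    by case E: (e x y) => //; move: (HB _ _ E); rewrite xB yB.
  rewrite -(Hk y) card_sum /= muln1; apply: eq_bigr => x _.
  rewrite sym; case E: (e y x); rewrite ?andbF ?andbT //.
  by move: (HB _ _ E); rewrite yB; case: (x \in B).
by apply/eqP; rewrite -(eqn_pmul2l k0) -N1 -N2.
Qed.

Lemma C4_odd (i j : 'I_4) : C4 i j = (odd i != odd j).
Proof. by case: i => [[|[|[|[|i]]]] Hi] //; case: j => [[|[|[|[|j]]]] Hj]. Qed.

Lemma C4_deg (i : 'I_4) : #|[set j | C4 i j]| = 2.
Proof.
rewrite card_sum !big_ord_recl big_ord0.
by case: i => [[|[|[|[|i]]]] Hi].
Qed.

Lemma crown_deg t u : #|[set v | crown t u v]| = t.-1.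
Proof.
have -> : [set v | crown t u v] = setX [set~ u.1] [set~ u.2].
  by apply/setP => -[b j]; rewrite !inE /crown /= ![_ == u.1]eq_sym ![_ == u.2]eq_sym.
by rewrite cardsX !cardsC1 card_bool card_ord mul1n.
Qed.

Lemma complete_bip (T : finType) (e : rel T) (B : {set T}) k :
  (forall x y, e x y -> (x \in B) != (y \in B)) ->
  (forall x, #|[set y | e x y]| = k) -> #|B| = #|~: B| -> k = #|B| ->
  forall x y, e x y = ((x \in B) != (y \in B)).
Proof.
move=> HB Hk bal kB x y.
have sub : [set y | e x y] \subset [set y | (y \in B) != (x \in B)].
  by apply/subsetP => z; rewrite !inE => /HB; rewrite eq_sym.
have Hc : #|[set y | e x y]| = #|[set y | (y \in B) != (x \in B)]|.
  by rewrite opp_card Hk -bal kB; case: (x \in B).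
have := (subset_cardP Hc sub) y; rewrite !inE => ->.
by rewrite eq_sym.
Qed.

Definition nu (T : finType) (e : rel T) (B : {set T}) (x : T) : T :=
  odflt x [pick y | ((y \in B) != (x \in B)) && ~~ e x y].

Lemma nu_spec (T : finType) (e : rel T) (B : {set T}) k :
  (forall x y, e x y -> (x \in B) != (y \in B)) ->
  (forall x, #|[set y | e x y]| = k) -> #|B| = #|~: B| -> k.+1 = #|B| ->
  forall x, ((nu e B x \in B) != (x \in B)) /\
    forall y, (y \in B) != (x \in B) -> (~~ e x y) = (y == nu e B x).
Proof.
move=> HB Hk bal kB x.
pose D := [set y | ((y \in B) != (x \in B)) && ~~ e x y].
have sub : [set y | e x y] \subset [set y | (y \in B) != (x \in B)].
  by apply/subsetP => z; rewrite !inE => /HB; rewrite eq_sym.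
have DE : D = [set y | (y \in B) != (x \in B)] :\: [set y | e x y].
  by apply/setP => y; rewrite !inE andbC.
have D1 : #|D| == 1.
  rewrite DE cardsD (setIidPr sub) opp_card Hk -bal -kB.
  by case: (x \in B); rewrite subSnn.
have [z Dz] := cards1P D1.
have Hz : nu e B x = z.
  rewrite /nu; case: pickP => [w Pw | none] /=.
    have : w \in D by rewrite inE.
    by rewrite Dz inE => /eqP.
  have : z \in D by rewrite Dz inE.
  by rewrite inE none.
split.
  have : z \in D by rewrite Dz inE.
  by rewrite inE Hz => /andP [].
move=> y yB; have := congr1 (fun A : {set T} => y \in A) Dz.
by rewrite !inE yB Hz.
Qed.

Lemma crown_struct (T : finType) (e : rel T) (B : {set T}) k :
  simple_graph e ->
  (forall x y, e x y -> (x \in B) != (y \in B)) ->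
  (forall x, #|[set y | e x y]| = k) -> #|B| = #|~: B| -> k.+1 = #|B| ->
  [/\ forall x, (nu e B x \in B) != (x \in B),
      forall x, nu e B (nu e B x) = x &
      forall x y, e x y = ((x \in B) != (y \in B)) && (y != nu e B x)].
Proof.
move=> [sym _] HB Hk bal kB.
have S := nu_spec HB Hk bal kB.
have ninv : forall x, nu e B (nu e B x) = x.
  move=> x; have [s1 P1] := S x; have [s2 P2] := S (nu e B x).
  apply/eqP; rewrite eq_sym -P2; last by rewrite eq_sym.
  by rewrite sym P1 // eqxx.
split => // [x|x y]; first by case: (S x).
have [s1 P1] := S x.
case: (eqVneq (x \in B) (y \in B)) => [E|ne] /=.
  by apply/negbTE/negP => /HB; rewrite E eqxx.
by rewrite -P1 ?negbK // eq_sym.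
Qed.

Lemma crown_iso (T : finType) (e : rel T) (B : {set T}) k :
  simple_graph e ->
  (forall x y, e x y -> (x \in B) != (y \in B)) ->
  (forall x, #|[set y | e x y]| = k) -> #|B| = #|~: B| -> k.+1 = #|B| ->
  graph_iso e (crown #|B|).
Proof.
move=> Hs HB Hk bal kB.
have [nside ninv ecr] := crown_struct Hs HB Hk bal kB.
have [a0 a0B] : exists a0, a0 \in B.
  by apply/card_gt0P; rewrite -kB.
pose r x := enum_rank_in a0B (if x \in B then x else nu e B x).
have rB : forall x, (if x \in B then x else nu e B x) \in B.
  move=> x; case xB: (x \in B) => //.
  by move: (nside x); rewrite xB; case: (_ \in B).
have rinj : forall x y, (r x == r y) = ((if x \in B then x else nu e B x) == (if y \in B then y else nu e B y)).
  move=> x y; apply/eqP/eqP => [H|H]; last by rewrite /r H.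
  by rewrite -(enum_rankK_in a0B (rB x)) -(enum_rankK_in a0B (rB y)); congr enum_val.
exists (fun x => (x \in B, r x)); split.
  apply: inj_card_bij.
    move=> x y [] E /eqP; rewrite rinj E; case: (y \in B) => /eqP // H.
    by rewrite -(ninv x) H ninv.
  by rewrite card_prod card_bool card_ord -(cardsC B) -bal; lia.
move=> x y; rewrite ecr /crown /= rinj.
case xB: (x \in B); case yB: (y \in B) => //=.
  by congr negb; apply/eqP/eqP => ->; rewrite ninv.
by rewrite eq_sym.
Qed.

Lemma C4_iso (T : finType) (e : rel T) (B : {set T}) :
  (forall x y, e x y = ((x \in B) != (y \in B))) ->
  #|B| = 2 -> #|~: B| = 2 -> graph_iso e C4.
Proof.
move=> He cB cC.
have [a0 a0B] : exists a0, a0 \in B by apply/card_gt0P; rewrite cB.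
have [b0 b0B] : exists b0, b0 \in ~: B by apply/card_gt0P; rewrite cC.
pose r x : nat := if x \in B then (enum_rank_in a0B x).*2 else (enum_rank_in b0B x).*2.+1.
have rlt : forall x, (r x < 4)%N.
  move=> x; rewrite /r; case: (x \in B).
    by have := ltn_ord (enum_rank_in a0B x); move: (nat_of_ord _); rewrite cB; lia.
  by have := ltn_ord (enum_rank_in b0B x); move: (nat_of_ord _); rewrite cC; lia.
have rodd : forall x, odd (r x) = (x \notin B).
  by move=> x; rewrite /r; case: (x \in B) => /=; rewrite odd_double.
exists (fun x => inord (r x) : 'I_4); split.
  apply: inj_card_bij; last by rewrite card_ord -(cardsC B) cB cC.
  move=> x y /(congr1 val); rewrite /= !inordK ?rlt // => H.
  have sd : (x \in B) = (y \in B).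
    by apply: negb_inj; rewrite -!rodd H.
  move: H; rewrite /r sd; case yB: (y \in B) => H.
    have xB : x \in B by rewrite sd.
    rewrite -(enum_rankK_in a0B xB) -(enum_rankK_in a0B yB).
    by congr enum_val; apply: val_inj; move/double_inj: H.
  have xB : x \in ~: B by rewrite inE sd yB.
  have yB' : y \in ~: B by rewrite inE yB.
  rewrite -(enum_rankK_in b0B xB) -(enum_rankK_in b0B yB').
  by congr enum_val; apply: val_inj; case: H => /double_inj.
move=> x y; rewrite He C4_odd !inordK ?rlt // !rodd.
by case: (x \in B); case: (y \in B).
Qed.

Local Open Scope ring_scope.

Lemma side_sum (T : finType) (B : {set T}) (b : bool) (c d : algC) :
  \sum_(y in (if b then B else ~: B)) (if y \in B then c else d) =
  (if b then c else d) *+ #|if b then B else ~: B|.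
Proof.
rewrite -sumr_const; apply: eq_bigr => y.
by case: b => [->|]; rewrite // inE => /negPf ->.
Qed.

Lemma kmm_eig (T : finType) (e : rel T) (B : {set T}) m l :
  (forall x y, e x y = ((x \in B) != (y \in B))) ->
  #|B| = m -> #|~: B| = m -> l \in spectrum e ->
  [|| l == 0, l == m%:R | l == - m%:R].
Proof.
move=> He cB cC /eigen_vec [v [x0 vx0] Hv].
pose a := \sum_(x in B) v x; pose b := \sum_(x in ~: B) v x.
have Hy : forall y, (if y \in B then b else a) = l * v y.
  move=> y; rewrite -Hv; under eq_bigr do rewrite He.
  rewrite sum_ind; case yB: (y \in B); apply: eq_bigl => x; rewrite ?inE;
    by case: (x \in B).
have E1 : b *+ m = l * a.
  rewrite mulr_sumr -cB -(side_sum B true b a); apply: eq_bigr => y yB.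
  by rewrite Hy.
have E2 : a *+ m = l * b.
  rewrite mulr_sumr -cC -(side_sum B false b a); apply: eq_bigr => y yB.
  by rewrite Hy.
have [l0|ln0] := eqVneq l 0; first by apply/orP; left; apply/eqP.
rewrite /=.
have e1 : l * a = b * m%:R by rewrite -E1 mulr_natr.
have e2 : l * b = a * m%:R by rewrite -E2 mulr_natr.
have Ha : (l ^+ 2 - m%:R ^+ 2) * a = 0.
  rewrite mulrBl expr2 -mulrA e1 mulrA e2; ring.
have Hb : (l ^+ 2 - m%:R ^+ 2) * b = 0.
  rewrite mulrBl expr2 -mulrA e2 mulrA e1; ring.
have [lm|lm] := eqVneq (l ^+ 2 - m%:R ^+ 2) 0.
  have : (l - m%:R) * (l + m%:R) == 0 by rewrite -subr_sqr lm.
  rewrite mulf_eq0 subr_eq0 addr_eq0 => /orP [] ->; by rewrite ?orbT.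
move/eqP: Ha; rewrite mulf_eq0 (negPf lm) /= => /eqP a0.
move/eqP: Hb; rewrite mulf_eq0 (negPf lm) /= => /eqP b0.
have := Hy x0; rewrite a0 b0 if_same => /esym/eqP.
by rewrite mulf_eq0 (negPf ln0) (negPf vx0).
Qed.

Lemma kmm_compl_eig (T : finType) (e : rel T) (B : {set T}) m l :
  (forall x y, e x y = ((x \in B) != (y \in B))) ->
  #|B| = m -> #|~: B| = m -> l \in spectrum (compl_graph e) ->
  (l == -1) || (l == m%:R - 1).
Proof.
move=> He cB cC /eigen_vec [v [x0 vx0] Hv].
pose a := \sum_(x in B) v x; pose b := \sum_(x in ~: B) v x.
have Hy : forall y, (if y \in B then a else b) = (l + 1) * v y.
  move=> y; rewrite mulrDl mul1r -Hv sum_ind.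
  rewrite (eq_bigl (fun x => ((x \in B) == (y \in B)) && (x != y))); last first.
    by move=> x; rewrite /compl_graph He negbK andbC.
  have HD : \sum_(x | (x \in B) == (y \in B)) v x =
      v y + \sum_(x | ((x \in B) == (y \in B)) && (x != y)) v x.
    by rewrite (bigD1 y) ?eqxx.
  have HS : \sum_(x | (x \in B) == (y \in B)) v x = if y \in B then a else b.
    by case yB: (y \in B); apply: eq_bigl => x; rewrite ?inE; case: (x \in B).
  by rewrite -HS HD addrC.
have E1 : a *+ m = (l + 1) * a.
  rewrite mulr_sumr -cB -(side_sum B true a b); apply: eq_bigr => y yB.
  by rewrite Hy.
have E2 : b *+ m = (l + 1) * b.
  rewrite mulr_sumr -cC -(side_sum B false a b); apply: eq_bigr => y yB.
  by rewrite Hy.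
have [lm|lm] := eqVneq (l + 1) m%:R.
  by apply/orP; right; rewrite -lm addrK.
have a0 : a = 0.
  apply/eqP; move/eqP: E1; rewrite -mulr_natl -subr_eq0 -mulrBl mulf_eq0.
  by rewrite subr_eq0 eq_sym (negPf lm).
have b0 : b = 0.
  apply/eqP; move/eqP: E2; rewrite -mulr_natl -subr_eq0 -mulrBl mulf_eq0.
  by rewrite subr_eq0 eq_sym (negPf lm).
have := Hy x0; rewrite a0 b0 if_same => /esym/eqP.
rewrite mulf_eq0 (negPf vx0) orbF addr_eq0 => ->.
by [].
Qed.

Lemma crown_eig (T : finType) (e : rel T) (B : {set T}) (nu : T -> T) m l :
  (forall x, (nu x \in B) != (x \in B)) -> (forall x, nu (nu x) = x) ->
  (forall x y, e x y = ((x \in B) != (y \in B)) && (y != nu x)) ->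
  #|B| = m -> #|~: B| = m -> l \in spectrum e ->
  [|| l == 1, l == -1, l == m%:R - 1 | l == 1 - m%:R].
Proof.
move=> nside ninv He cB cC /eigen_vec [v [x0 vx0] Hv].
pose a := \sum_(x in B) v x; pose b := \sum_(x in ~: B) v x.
have Hy : forall y, (if y \in B then b else a) - v (nu y) = l * v y.
  move=> y; rewrite -Hv sum_ind.
  rewrite (eq_bigl (fun x => ((x \in B) != (y \in B)) && (x != nu y))); last first.
    move=> x; rewrite He; congr (_ && _); congr negb.
    by apply/eqP/eqP => ->; rewrite ninv.
  have HD : \sum_(x | (x \in B) != (y \in B)) v x =
      v (nu y) + \sum_(x | ((x \in B) != (y \in B)) && (x != nu y)) v x.
    by rewrite (bigD1 (nu y)) ?nside.
  have HS : \sum_(x | (x \in B) != (y \in B)) v x = if y \in B then b else a.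
    by case yB: (y \in B); apply: eq_bigl => x; rewrite ?inE; case: (x \in B).
  by rewrite -HS HD addrC addKr.
have G : forall y, (l ^+ 2 - 1) * v y = if y \in B then l * b - a else l * a - b.
  move=> y; move: (nside y) (Hy y) (Hy (nu y)); rewrite ninv.
  case: (y \in B); case: (nu y \in B) => //= _ H1 H2.
    have E : v (nu y) = b - l * v y by rewrite -H1; ring.
    rewrite E in H2; have -> : a = v y + l * (b - l * v y) by rewrite -H2; ring.
    ring.
  have E : v (nu y) = a - l * v y by rewrite -H1; ring.
  rewrite E in H2; have -> : b = v y + l * (a - l * v y) by rewrite -H2; ring.
  ring.
have E1 : (l ^+ 2 - 1) * a = (l * b - a) *+ m.
  rewrite mulr_sumr -cB -(side_sum B true (l * b - a) (l * a - b)).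
  by apply: eq_bigr => y yB; rewrite G.
have E2 : (l ^+ 2 - 1) * b = (l * a - b) *+ m.
  rewrite mulr_sumr -cC -(side_sum B false (l * b - a) (l * a - b)).
  by apply: eq_bigr => y yB; rewrite G.
set M := m%:R.
have e1 : (l ^+ 2 - 1 + M) * a = M * l * b by rewrite mulrDl E1 -mulr_natl -/M; ring.
have e2 : (l ^+ 2 - 1 + M) * b = M * l * a by rewrite mulrDl E2 -mulr_natl -/M; ring.
set mu := l ^+ 2 - 1 + M in e1 e2.
have Ha : (mu ^+ 2 - M ^+ 2 * l ^+ 2) * a = 0.
  have h1 : mu * (mu * a) = M * l * (M * l * a) by rewrite e1 mulrCA e2.
  have -> : (mu ^+ 2 - M ^+ 2 * l ^+ 2) * a = mu * (mu * a) - M ^+ 2 * l ^+ 2 * a by ring.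
  rewrite h1; ring.
have Hb : (mu ^+ 2 - M ^+ 2 * l ^+ 2) * b = 0.
  have h1 : mu * (mu * b) = M * l * (M * l * b) by rewrite e2 mulrCA e1.
  have -> : (mu ^+ 2 - M ^+ 2 * l ^+ 2) * b = mu * (mu * b) - M ^+ 2 * l ^+ 2 * b by ring.
  rewrite h1; ring.
have [lm|lm] := eqVneq (mu ^+ 2 - M ^+ 2 * l ^+ 2) 0.
  have : ((l - 1) * (l - (M - 1))) * ((l + 1) * (l + (M - 1))) == 0.
    by rewrite -lm /mu; apply/eqP; ring.
  rewrite !mulf_eq0 !subr_eq0 !addr_eq0 opprB.
  by case/orP => /orP [] ->; rewrite ?orbT.
move/eqP: Ha; rewrite mulf_eq0 (negPf lm) /= => /eqP a0.
move/eqP: Hb; rewrite mulf_eq0 (negPf lm) /= => /eqP b0.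
have := G x0; rewrite a0 b0 mulr0 subrr if_same => /eqP.
rewrite mulf_eq0 (negPf vx0) orbF.
have -> : l ^+ 2 - 1 = (l - 1) * (l + 1) by ring.
by rewrite mulf_eq0 subr_eq0 addr_eq0 => /orP [] ->; rewrite ?orbT.
Qed.


Lemma iso_deg (T S : finType) (e : rel T) (f : rel S) d :
  graph_iso e f -> (forall u, #|[set w | f u w]| = d) ->
  (forall x, #|[set y | e x y]| = d) /\ #|T| = #|S|.
Proof.
move=> [g [gb Hg]] Hd; split; last exact: bij_eq_card gb.
move=> x; rewrite -(Hd (g x)) -(on_card_preimset (onW_bij _ gb)).
by apply: eq_card => y; rewrite !inE Hg.
Qed.

Lemma count_sum (s : seq algC) c :
  \sum_(z <- s) ((z == c)%:R : algC) = (count_mem c s)%:R.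
Proof.
elim: s => [|z s IH]; first by rewrite big_nil.
by rewrite big_cons IH /= natrD.
Qed.

Lemma compl_int (T : finType) (e : rel T) k : simple_graph e ->
  (forall x, #|[set y | e x y]| = k) -> k%:R \in spectrum e ->
  integral_graph e -> integral_graph (compl_graph e).
Proof.
move=> Hs Hk kS /allP Hi; apply/allP => z.
rewrite (perm_mem (compl_spec Hs Hk kS)) inE => /orP [/eqP -> | /mapP [w wr ->]].
  by rewrite rpredB ?rpredB ?natr_int ?rpred1.
by rewrite rpredB ?rpredN ?rpred1 // Hi // (mem_rem wr).
Qed.

Lemma natr_eqN (a b : nat) : ((a%:R : algC) == - b%:R) = (a + b == 0)%N.
Proof. by rewrite -subr_eq0 opprK -natrD pnatr_eq0. Qed.

Lemma sum_const_seq (s : seq algC) (c : algC) : \sum_(z <- s) c = c *+ size s.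
Proof.
elim: s => [|z s IH]; first by rewrite big_nil.
by rewrite big_cons IH mulrS.
Qed.

Lemma kmm_hh (T : finType) (e : rel T) (B : {set T}) m :
  simple_graph e -> (forall x, #|[set y | e x y]| = m) ->
  (forall x y, e x y = ((x \in B) != (y \in B))) ->
  #|B| = m -> #|~: B| = m -> (1 <= m)%N ->
  \sum_(z <- spectrum e) hh z + 4 = (4 * m)%:R.
Proof.
move=> Hs Hk He cB cC m1.
have Hb : bipartite_graph e by exists B => x y; rewrite He.
have nT : #|T| = (m + m)%N by rewrite -(cardsC B) cB cC.
have n0 : (0 < #|T|)%N by rewrite nT; lia.
have kS := deg_in_spec Hs Hk n0.
have eS := kmm_eig He cB cC.
have H1 : \sum_(z <- spectrum e) hh z =
    \sum_(z <- spectrum e) (2 - 2 * (z == m%:R)%:R - 2 * (z == - m%:R)%:R).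
  apply: eq_big_seq => z /eS /or3P [] /eqP ->.
  - rewrite hh0 [0 == _]eq_sym pnatr_eq0 [0 == _]eq_sym oppr_eq0 pnatr_eq0.
    have -> : (m == 0)%N = false by lia.
    by rewrite /=; ring.
  - rewrite hh_nat // eqxx natr_eqN.
    have -> : (m + m == 0)%N = false by lia.
    by rewrite /=; ring.
  - rewrite hhN hh_nat // eqxx [- _ == _]eq_sym natr_eqN.
    have -> : (m + m == 0)%N = false by lia.
    by rewrite /=; ring.
have c1 : count_mem (m%:R : algC) (spectrum e) = 1%N.
  rewrite (permP (perm_to_rem kS)) /= eqxx add1n; congr S.
  apply/count_memPn/negP => Hr.
  have : -1 - m%:R \in spectrum (compl_graph e).
    by rewrite (perm_mem (compl_spec Hs Hk kS)) inE; apply/orP; right; apply/mapP; exists m%:R.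
  move/(kmm_compl_eig He cB cC) => /orP [] /eqP.
    move/eqP; rewrite -subr_eq0.
    have -> : -1 - m%:R - -1 = - m%:R :> algC by ring.
    by rewrite oppr_eq0 pnatr_eq0; lia.
  move/eqP; rewrite -subr_eq0.
  have -> : -1 - m%:R - (m%:R - 1) = - (m + m)%:R :> algC by rewrite natrD; ring.
  by rewrite oppr_eq0 pnatr_eq0; lia.
have c2 : count_mem (- m%:R : algC) (spectrum e) = 1%N.
  rewrite (permP (bip_sym Hs Hb)) count_map -c1; apply: eq_count => z /=.
  by rewrite eqr_opp.
rewrite H1 !sumrB -!mulr_sumr !count_sum c1 c2 sum_const_seq size_spectrum nT.
rewrite -mulr_natl !natrD; ring.
Qed.

Lemma gap (a b : nat) (X : algC) : (a < b)%N -> 0 <= X -> ((b%:R : algC) + X != a%:R)%R.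
Proof.
move=> ab X0; apply/eqP => H.
have : (a%:R : algC) < b%:R + X by rewrite ltr_wpDr // ltr_nat.
by rewrite H ltxx.
Qed.

Theorem mainTheorem4 (T : finType) (e : rel T) :
  simple_graph e -> (2 <= #|T|)%N -> regular_graph e -> bipartite_graph e ->
  ((energy e = energy (compl_graph e)) <->
     (graph_iso e C4 \/ exists t : nat, (2 <= t)%N /\ graph_iso e (crown t)))
  /\
  ((graph_iso e C4 \/ exists t : nat, (2 <= t)%N /\ graph_iso e (crown t)) ->
     [/\ integral_graph e, integral_graph (compl_graph e)
       & ~ isospectral e (compl_graph e)]).
Proof.
move=> Hs Hn [k Hk] Hb.
have [B HB] := Hb.
have n0 : (0 < #|T|)%N by apply: leq_trans Hn.
have [x0 _] := card_gt0P n0.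
have kn : (k < #|T|)%N.
  have [_ irr] := Hs.
  have : [set y | e x0 y] \subset [set~ x0].
    apply/subsetP => y; rewrite !inE; apply: contraTneq => ->; exact: irr.
  by move/subset_leq_card; rewrite cardsC1 Hk; lia.
have kS := deg_in_spec Hs Hk n0.
have ED := energy_diff Hs Hb Hk kn.
have isoC4 : graph_iso e C4 -> k = 2 /\ #|T| = 4.
  move=> Hi; have [Hd Hc] := iso_deg Hi C4_deg.
  by split; [rewrite -(Hk x0) Hd | rewrite Hc card_ord].
have isoCr : forall t, graph_iso e (crown t) -> k = t.-1 /\ #|T| = (2 * t)%N.
  move=> t Hi; have [Hd Hc] := iso_deg Hi (@crown_deg t).
  by split; [rewrite -(Hk x0) Hd | rewrite Hc card_prod card_bool card_ord].
have hpos : (0 <= \sum_(z <- spectrum e) hh z)%R by apply: sumr_ge0 => z _; exact: hh_ge0.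
case: (posnP k) => [k0|kpos].
  have niso : ~ (graph_iso e C4 \/ exists t : nat, (2 <= t)%N /\ graph_iso e (crown t)).
    case=> [/isoC4 [] | [t [t2 /isoCr []]]]; lia.
  have nE : energy e <> energy (compl_graph e).
    move/ED; apply/eqP.
    rewrite (perm_big _ (perm_to_rem kS)) big_cons /= k0 hh0 addrA.
    have -> : ((2 * #|T|)%:R + 2 = (2 * #|T| + 2)%:R :> algC)%R by rewrite natrD.
    apply: gap; last by apply: sumr_ge0 => z _; exact: hh_ge0.
    lia.
  by split; [split => // /niso | move/niso].
have bal := balanced Hs HB Hk kpos.
have nT : #|T| = (#|B| + #|B|)%N by rewrite -(cardsC B) -bal.
have km : (k <= #|B|)%N.
  by have := deg_le x0 HB Hk; rewrite -bal if_same.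
have [km2|[km1|kmm]] : (k.+2 <= #|B|)%N \/ (k.+1 = #|B| \/ k = #|B|) by lia.
-
  have niso : ~ (graph_iso e C4 \/ exists t : nat, (2 <= t)%N /\ graph_iso e (crown t)).
    case=> [/isoC4 [] | [t [t2 /isoCr []]]]; lia.
  have nE : energy e <> energy (compl_graph e).
    move/ED; apply/eqP; apply: gap => //; lia.
  by split; [split => // /niso | move/niso].
-
  have [nside ninv ecr] := crown_struct Hs HB Hk bal km1.
  have eS : forall z, z \in spectrum e ->
      [|| z == 1, z == -1, z == k%:R | z == - k%:R].
    move=> z /(crown_eig nside ninv ecr (erefl _) (esym bal)).
    have -> : (#|B|%:R - 1 : algC) = k%:R by rewrite -km1 -addn1 natrD addrK.
    have -> : (1 - #|B|%:R : algC) = - k%:R by rewrite -km1 -addn1 natrD; ring.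
    by case/or4P => ->; rewrite ?orbT.
  have Sint : integral_graph e.
    apply/allP => z /eS /or4P [] /eqP ->;
      by rewrite ?rpredN ?natr_int ?rpred1.
  have hz : \sum_(z <- spectrum e) hh z = 0.
    have hh1 : hh 1 = 0 by exact: (@hh_nat 1 isT).
    rewrite big_seq big1 // => z /eS /or4P [] /eqP ->;
      by rewrite ?hhN ?hh1 ?hh_nat.
  split.
    split=> _; last first.
      by apply/ED; rewrite hz addr0 nT; congr (_%:R); lia.
    by right; exists #|B|; split; [lia | exact: crown_iso Hs HB Hk bal km1].
  move=> _; split => //; first exact: compl_int Hs Hk kS Sint.
  move=> Hiso.
  have : (#|T|%:R - 1 - k%:R) \in spectrum e.
    by rewrite (perm_mem Hiso) (perm_mem (compl_spec Hs Hk kS)) mem_head.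
  have -> : (#|T|%:R - 1 - k%:R : algC) = k.+1%:R.
    by rewrite nT -km1 !natrD -addn1 natrD; ring.
  move/eS; rewrite -[1]/(1%:R) eqr_nat eqr_nat !natr_eqN.
  by case/or4P => /eqP; lia.
have He := complete_bip HB Hk bal kmm.
have cC : #|~: B| = #|B| by rewrite -bal.
rewrite -kmm in cC.
have cB : #|B| = k by [].
have Hhh := kmm_hh Hs Hk He (esym kmm) cC kpos.
have isoE : (graph_iso e C4 \/ exists t : nat, (2 <= t)%N /\ graph_iso e (crown t)) <-> k = 2%N.
  split.
    case=> [/isoC4 [] //| [t [t2 /isoCr []]]]; lia.
  move=> k2; left; apply: (C4_iso He); lia.
have eS : forall z, z \in spectrum e -> [|| z == 0, z == k%:R | z == - k%:R].
  by move=> z; apply: kmm_eig He (esym kmm) cC.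
split.
  rewrite isoE; split.
    move/ED => H.
    have : ((2 * #|T|)%:R + \sum_(z <- spectrum e) hh z + 4 = (4 + 4 * k)%:R + 4 :> algC)%R.
      by rewrite H.
    rewrite -addrA Hhh -!natrD.
    move/eqP; rewrite eqr_nat; lia.
  move=> k2; apply/ED.
  apply: (addIr (4 : algC)); rewrite -addrA Hhh -!natrD; congr (_%:R); lia.
move/isoE => k2.
have Sint : integral_graph e.
  apply/allP => z /eS /or3P [] /eqP ->;
    by rewrite ?rpredN ?natr_int ?rpred0.
split => //; first exact: compl_int Hs Hk kS Sint.
move=> Hiso.
have : (#|T|%:R - 1 - k%:R) \in spectrum e.
  by rewrite (perm_mem Hiso) (perm_mem (compl_spec Hs Hk kS)) mem_head.
have -> : (#|T|%:R - 1 - k%:R : algC) = 1.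
  rewrite nT -kmm k2 !natrD; ring.
move/eS; rewrite -[1]/(1%:R) -[0]/(0%:R) !eqr_nat !natr_eqN.
by case/or3P => /eqP; lia.
Qed.
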